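(* Let $G$ be a finite simple graph on $n\geq 2$ vertices. Then $\mathrm{nRel}(G;p)$ is concave down for $p$ sufficiently close to $0$; that is, there is $\varepsilon>0$ such that $\frac{d^2}{dp^2}\mathrm{nRel}(G;p)<0$ for all $p\in(0,\varepsilon)$.
   Context: For a graph $G$ on $n$ vertices, a connected set is a nonempty vertex subset $C$ such that the induced subgraph $G[C]$ is connected. The node reliability of $G$ is the polynomial \[ \mathrm{nRel}(G;p)=\sum_{C}p^{|C|}(1-p)^{n-|C|}, \] the sum over all connected sets $C$ of $G$. *)

(* Defs.v *)
From mathcomp Require Import all_boot all_order all_algebra.
From mathcomp Require Import reals.
Set Implicit Arguments. Unset Strict Implicit. Unset Printing Implicit Defensive.
Import Order.TTheory GRing.Theory Num.Theory.

Definition simple_graph (T : finType) (e : rel T) : Prop :=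
  symmetric e /\ irreflexive e.

Definition induced_rel (T : finType) (e : rel T) (C : {set T}) : rel T :=
  [rel x y | [&& x \in C, y \in C & e x y]].

Definition connected_set (T : finType) (e : rel T) (C : {set T}) : bool :=
  (C != set0) &&
  [forall x in C, forall y in C, connect (induced_rel e C) x y].

Local Open Scope ring_scope.

Definition nRel (R : nzRingType) (T : finType) (e : rel T) : {poly R} :=
  \sum_(C : {set T} | connected_set e C)
     ('X ^+ #|C| * (1 - 'X) ^+ (#|T| - #|C|)%N).

(* Main.v *)
Require Import Defs.
From mathcomp Require Import all_boot all_order all_algebra.
From mathcomp Require Import reals.
Import Order.TTheory GRing.Theory Num.Theory.
Local Open Scope ring_scope.
Lemma poly_bound01 (R : realFieldType) (q : {poly R}) :
  exists M : R, 0 <= M /\ forall p, 0 <= p -> p <= 1 -> `|q.[p]| <= M.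
Proof.
elim/poly_ind: q => [|q c [M [M0 HM]]].
  by exists 0; split=> // p _ _; rewrite horner0 normr0.
exists (M + `|c|); split; first by rewrite addr_ge0.
move=> p p0 p1; rewrite hornerMXaddC.
apply: (le_trans (ler_normD _ _)); rewrite lerD2r normrM.
have := HM p p0 p1 => h.
rewrite -[M]mulr1; apply: ler_pM => //.
by rewrite ger0_norm.
Qed.

Lemma poly_split0 (R : nzRingType) (q : {poly R}) :
  exists q', q = q' * 'X + (q.[0])%:P.
Proof.
elim/poly_ind: q => [|q c _].
  by exists 0; rewrite mul0r add0r horner0.
by exists q; rewrite hornerMXaddC mulr0 add0r.
Qed.

Lemma near0_neg (R : realFieldType) (q : {poly R}) : q.[0] < 0 ->
  exists2 eps : R, 0 < eps & forall p, 0 < p -> p < eps -> q.[p] < 0.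
Proof.
move=> q0; have [q' Hq] := @poly_split0 _ q.
have [M [M0 HM]] := @poly_bound01 _ q'.
set c := q.[0] in q0 Hq *.
have M1 : 0 < M + 1 by rewrite ltr_wpDl.
exists (Num.min 1 (- c / (M + 1))).
  by rewrite lt_min ltr01 /= divr_gt0 // oppr_gt0.
move=> p p0; rewrite lt_min => /andP [p1 pc].
rewrite Hq hornerMXaddC.
have h1 : q'.[p] * p <= M * p.
  apply: ler_wpM2r; first exact: ltW.
  exact: le_trans (ler_norm _) (HM p (ltW p0) (ltW p1)).
have h2 : M * p < - c.
  rewrite ltr_pdivlMr // in pc.
  apply: le_lt_trans pc; rewrite mulrC ler_wpM2l ?ltW //.
  by rewrite ltrDl ltr01.
rewrite -subr_lt0 in h2; rewrite opprK in h2.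
apply: le_lt_trans _ h2; by rewrite lerD2r.
Qed.

Lemma coef01_1X (R : nzRingType) (j : nat) :
  ((1 - 'X : {poly R}) ^+ j)`_0 = 1 /\ ((1 - 'X : {poly R}) ^+ j)`_1 = - j%:R.
Proof.
elim: j => [|j [h0 h1]]; first by rewrite expr0 !coef1 /= oppr0.
rewrite exprSr mulrBr mulr1 !coefB !coefMX /= h0 h1 subr0; split=> //.
by rewrite -opprD -(natr1 j) addrC.
Qed.

Lemma coef2_term (R : nzRingType) (k j : nat) : (0 < k)%N ->
  ('X ^+ k * (1 - 'X : {poly R}) ^+ j)`_2 =
  if k == 2%N then 1 else if k == 1%N then - j%:R else 0.
Proof.
move=> k0; have [h0 h1] := @coef01_1X R j.
rewrite coefXnM.
case: k k0 => [|[|[|k]]] //= _; by rewrite ?subnn ?h0 ?h1.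
Qed.

Lemma single_conn (T : finType) (e : rel T) (x : T) : connected_set e [set x].
Proof.
apply/andP; split; first by apply/set0Pn; exists x; rewrite inE.
apply/forallP => y; apply/implyP; rewrite inE => /eqP ->.
apply/forallP => z; apply/implyP; rewrite inE => /eqP ->.
exact: connect0.
Qed.

Lemma sum_card_eq (R : nzRingType) (T : finType) (k : nat) :
  \sum_(C : {set T}) ((#|C| == k)%:R : R) = ('C(#|T|, k))%:R.
Proof.
rewrite -card_draws -sum1_card natr_sum big_mkcond /=.
rewrite [RHS]big_mkcond /=; apply: eq_bigr => C _; rewrite inE; by case: (_ == _).
Qed.

Lemma coef2_neg (R : realDomainType) (T : finType) (e : rel T) :
  (2 <= #|T|)%N -> (nRel R e)`_2 < 0.
Proof.
move=> n2; set n := #|T|.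
pose g (C : {set T}) : R := (#|C| == 2%N)%:R - (n.-1)%:R * (#|C| == 1%N)%:R.
have E : (nRel R e)`_2 = \sum_(C | connected_set e C) g C.
  rewrite /nRel coef_sum; apply: eq_bigr => C /andP [CN _].
  rewrite coef2_term; last by rewrite card_gt0.
  rewrite /g; case: eqP => [->|_]; first by rewrite /= mulr0 subr0.
  case: eqP => [->|_]; last by rewrite mulr0 subr0.
  by rewrite mulr1 sub0r /n subn1.
have L : \sum_(C | connected_set e C) g C <= \sum_C g C.
  rewrite [X in _ <= X](bigID (fun C => connected_set e C)) /= lerDl.
  apply: sumr_ge0 => C nC.
  rewrite /g; case: (boolP (#|C| == 1%N)) => [/cards1P [x Cx]|_].
    by rewrite Cx single_conn in nC.
  by rewrite mulr0 subr0 ler0n.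
have S : \sum_C g C = ('C(n, 2))%:R - (n.-1)%:R * (n%:R) :> R.
  rewrite /g sumrB -mulr_sumr !sum_card_eq bin1 //.
rewrite E; apply: le_lt_trans L _; rewrite S subr_lt0 -natrM ltr_nat.
rewrite bin2 ltn_half_double -mul2n mulnC ltn_Pmull //.
rewrite muln_gt0 /n; move: n2; clear; by case: #|T| => [|[|]].
Qed.

Theorem lemma3p1 (R : realType) (T : finType) (e : rel T) :
  simple_graph e -> (2 <= #|T|)%N ->
  exists2 eps : R, 0 < eps &
    forall p : R, 0 < p -> p < eps -> ((nRel R e)^`(2)).[p] < 0.
Proof.
move=> _ n2; apply: near0_neg.
rewrite horner_coef0 coef_derivn addn0 -mulr_natr pmulr_llt0 //.
exact: coef2_neg.
Qed.
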